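(* Let $n\ge3$, $1\le i\le n-1$, and define integers $a_1,\dots,a_{i(n-i)}\in\{1,\dots,n-1\}$ by the word $$s_{a_1}s_{a_2}\cdots s_{a_{i(n-i)}}:=(s_is_{i-1}\cdots s_1)(s_{i+1}s_i\cdots s_2)\cdots(s_{n-1}s_{n-2}\cdots s_{n-i})$$ (a product of $n-i$ blocks of $i$ consecutive descending simple reflections; it is a reduced expression of $\bar\omega^{-i}$). For $w\in W_0$ consider the condition $$(\ast)\qquad w<ws_{a_1}<ws_{a_1}s_{a_2}<\cdots<ws_{a_1}s_{a_2}\cdots s_{a_{i(n-i)}}$$ in the Bruhat order. Then: (a) $w$ satisfies $(\ast)$ if and only if $w\in W_{(i),0}$. (b) $w$ violates $(\ast)$ at exactly one place (i.e. there is exactly one $j$ with $ws_{a_1}\cdots s_{a_{j-1}}\not< ws_{a_1}\cdots s_{a_j}$) if and only if $w\in s_iW_{(i),0}$. In this case, for the unique $1\le j\le i(n-i)$ with $ws_{a_1}\cdots s_{a_{j-1}}>ws_{a_1}\cdots s_{a_{j-1}}s_{a_j}$, one has $ws_{a_1}\cdots s_{a_{j-1}}(\alpha_{a_j})=-\alpha_i$.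
   Context: $W_0=\mathfrak{S}_n$ is the Weyl group of $\mathrm{GL}_n$, with simple reflections $s_j=(j,j+1)$, Bruhat order $\le$, and acting on the roots $\alpha_{j,k}$ ($j\ne k$; $\alpha_{j,k}(\mathrm{diag}(t_1,\dots,t_n))=t_jt_k^{-1}$) by $w(\alpha_{j,k})=\alpha_{w(j),w(k)}$; simple roots $\alpha_j=\alpha_{j,j+1}$, and $-\alpha_{j,k}=\alpha_{k,j}$. $\bar\omega$ is the $n$-cycle with $\bar\omega(1)=n$, $\bar\omega(k)=k-1$ for $k\ge2$. $W_{(i),0}$ is the subgroup generated by $\{s_j:j\ne i\}$. *)

(* Defs.v *)
From mathcomp Require Import all_boot all_order all_fingroup.
Set Implicit Arguments. Unset Strict Implicit. Unset Printing Implicit Defensive.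

(* W_0 = S_n realized as 'S_n = {perm 'I_n}.  Paper position p in {1..n}
   corresponds to the ordinal p-1 : 'I_n. *)

(* Composition as functions: (fcomp u v) x = u (v x).  This is the paper's
   product "u v" (MathComp's (u * v)%g on perms means "first u, then v"). *)
Definition fcomp n (u v : 'S_n) : 'S_n := (v * u)%g.

(* simple reflection s_j = (j, j+1), 1 <= j <= n-1 (paper indexing) *)
Definition sref n (j : nat) : 'S_n :=
  match n as m return 'S_m with
  | 0 => 1%g
  | m'.+1 => tperm (inord j.-1 : 'I_m'.+1) (inord j)
  end.

Definition pact n (w : 'S_n) (p : nat) : nat :=
  match @insub nat (fun x => x < n) _ p.-1 with
  | Some x => (w x).+1
  | None => p
  end.

(* roots alpha_{j,k} (j <> k positions in {1..n}) encoded as pairs (j,k) *)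
Definition root := (nat * nat)%type.
Definition alpha (j k : nat) : root := (j, k).
Definition simple_root (j : nat) : root := alpha j j.+1.
Definition negroot (r : root) : root := (r.2, r.1).
Definition root_act n (w : 'S_n) (r : root) : root := (pact w r.1, pact w r.2).

(* Coxeter length of a permutation = number of inversions *)
Definition len n (w : 'S_n) : nat :=
  #|[set p : 'I_n * 'I_n | (p.1 < p.2) && (w p.2 < w p.1)]|.

(* reflections of S_n are the transpositions *)
Definition is_reflection n (t : 'S_n) : bool :=
  [exists x : 'I_n, exists y : 'I_n, (x != y) && (t == tperm x y)].

Definition bruhat_step n : rel 'S_n :=
  fun u v => [exists t : 'S_n, is_reflection t && (v == fcomp u t) && (len u < len v)].
Definition bruhat_le n (u v : 'S_n) : bool := connect (@bruhat_step n) u v.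
Definition bruhat_lt n (u v : 'S_n) : bool := (u != v) && bruhat_le u v.

Definition Wi0 n (i : nat) : {set 'S_n} :=
  << [set sref n (j : 'I_n) | j : 'I_n & (0 < (j : nat)) && ((j : nat) != i)] >>%g.

(* the word a_1 ... a_{i(n-i)} :
   (s_i ... s_1)(s_{i+1} ... s_2) ... (s_{n-1} ... s_{n-i}) *)
Definition word (n i : nat) : seq nat :=
  flatten [seq [seq i + b - c | c <- iota 0 i] | b <- iota 0 (n - i)].

Definition pref n (i : nat) (w : 'S_n) (k : nat) : 'S_n :=
  foldl (fun u a => fcomp u (sref n a)) w (take k (word n i)).

(* Main.v *)
Require Import Defs.
From mathcomp Require Import all_boot all_order all_fingroup.
From mathcomp Require Import zify.
Set Implicit Arguments. Unset Strict Implicit. Unset Printing Implicit Defensive.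

Section H.
Variable n : nat.
Local Notation N := n.+1.

Definition sw (a x : nat) : nat :=
  if x == a.-1 then a else if x == a then a.-1 else x.

Lemma srefE (a : nat) (x : 'I_N) : 0 < a < N ->
  val (sref N a x) = sw a x.
Proof.
move=> /andP[a0 aN]; rewrite /sref /sw.
have ka : val (inord a : 'I_N) = a by apply: inordK.
have ka1 : val (inord a.-1 : 'I_N) = a.-1 by apply: inordK; lia.
case: tpermP => [->|->|h1 h2].
- by rewrite ka ka1 eqxx.
- rewrite ka ka1 eqxx; case: ifP => //; lia.
- have h1' : val x != a.-1 by apply/eqP=> e; apply: h1; apply: val_inj; rewrite /= ka1.
  have h2' : val x != a by apply/eqP=> e; apply: h2; apply: val_inj; rewrite /= ka.
  by rewrite (negbTE h1') (negbTE h2').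
Qed.

Lemma fcompE (u v : 'S_N) x : fcomp u v x = u (v x).
Proof. by rewrite /fcomp permM. Qed.

Lemma sref_inv a : fcomp (fcomp (sref N a) (sref N a)) = id.
Abort.

Lemma srefK a (u : 'S_N) : fcomp (fcomp u (sref N a)) (sref N a) = u.
Proof. by apply/permP=> x; rewrite !fcompE /sref tpermK. Qed.

Lemma srefKl a (u : 'S_N) : fcomp (sref N a) (fcomp (sref N a) u) = u.
Proof. by apply/permP=> x; rewrite !fcompE /sref tpermK. Qed.

Definition inv (u : 'S_N) := [set p : 'I_N * 'I_N | (p.1 < p.2) && (u p.2 < u p.1)].

Lemma len_up (u : 'S_N) a : 0 < a < N -> u (inord a.-1) < u (inord a) ->
  len u < len (fcomp u (sref N a)).
Proof.
move=> aN hu; rewrite /len.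
set s := sref N a.
pose f := fun p : 'I_N * 'I_N => (s p.1, s p.2).
have finj : injective f.
  by move=> [x1 y1] [x2 y2] [/perm_inj -> /perm_inj ->].
rewrite -(card_imset _ finj); apply: proper_card.
apply/properP; split.
- apply/subsetP=> p /imsetP[[x y] /=]; rewrite inE /= => /andP[xy uyx] ->.
  rewrite inE /= !fcompE /s /sref !tpermK uyx andbT.
  move: (srefE x aN) (srefE y aN); rewrite /s /sw => -> ->.
  have : ~~ ((val x == a.-1) && (val y == a)).
    apply/negP=> /andP[/eqP ex /eqP ey].
    have ex' : x = inord a.-1 by apply: val_inj; rewrite /= inordK //; lia.
    have ey' : y = inord a by apply: val_inj; rewrite /= inordK //; lia.
    by move: uyx; rewrite ex' ey' ltnNge (ltnW hu).
  move: xy.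
  case: (nat_of_ord x =P a.-1) => ?; case: (nat_of_ord x =P a) => ?;
  case: (nat_of_ord y =P a.-1) => ?; case: (nat_of_ord y =P a) => ? /= xy0 nh //; lia.
- exists (inord a.-1, inord a).
    rewrite inE /= !fcompE !inordK; try lia.
    have -> : s (inord a) = inord a.-1 by rewrite /s /sref tpermR.
    have -> : s (inord a.-1) = inord a by rewrite /s /sref tpermL.
    rewrite hu andbT; lia.
  apply/imsetP=> [[[x y]]]; rewrite inE /= => /andP[xy _] [ex ey].
  have : (x, y) = (s (inord a.-1), s (inord a)).
    by rewrite ex ey /s /sref !tpermK.
  rewrite /s /sref tpermR tpermL => -[ex' ey'].
  by move: xy; rewrite ex' ey' !inordK; lia.
Qed.

Lemma bruhat_lt_len (u v : 'S_N) : bruhat_lt u v -> len u < len v.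
Proof.
case/andP=> uv /connectP[p pth ev].
elim: p u pth ev uv => [|y p IH] u /=; first by move=> _ -> /eqP.
case/andP=> /existsP[t /andP[/andP[_ /eqP ey] lt]] pth ev uv.
case: (eqVneq y v) => [<-//|yv].
by apply: (ltn_trans lt); apply: IH.
Qed.

Lemma sref_a1 a (u : 'S_N) : 0 < a < N -> fcomp u (sref N a) (inord a.-1) = u (inord a).
Proof. by move=> _; rewrite fcompE /sref tpermL. Qed.
Lemma sref_a a (u : 'S_N) : 0 < a < N -> fcomp u (sref N a) (inord a) = u (inord a.-1).
Proof. by move=> _; rewrite fcompE /sref tpermR. Qed.

Lemma inord_neq a : 0 < a < N -> (inord a.-1 : 'I_N) != inord a.
Proof.
move=> aN; apply/eqP=> /(congr1 val); rewrite /= !inordK; lia.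
Qed.

Lemma u_neq (u : 'S_N) a : 0 < a < N -> u (inord a.-1) != u (inord a).
Proof. by move=> aN; rewrite (inj_eq perm_inj) inord_neq. Qed.

Lemma L1 (u : 'S_N) a : 0 < a < N ->
  bruhat_lt u (fcomp u (sref N a)) = (u (inord a.-1) < u (inord a)).
Proof.
move=> aN; case h: (u (inord a.-1) < u (inord a)).
- have hl := len_up aN h.
  apply/andP; split.
    by apply/eqP=> e; move: hl; rewrite -e ltnn.
  apply: connect1; apply/existsP; exists (sref N a).
  rewrite eqxx hl andbT /=.
  rewrite andbT; apply/existsP; exists (inord a.-1); apply/existsP; exists (inord a).
  by rewrite inord_neq // eqxx.
- apply/negP=> /bruhat_lt_len hl.
  have h2 : fcomp u (sref N a) (inord a.-1) < fcomp u (sref N a) (inord a).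
    rewrite sref_a1 // sref_a //.
    by move: (u_neq u aN) h; rewrite neq_ltn => /orP[->|].
  move: (len_up aN h2); rewrite srefK => h3.
  by move: (ltn_trans hl h3); rewrite ltnn.
Qed.

Lemma L2 (u : 'S_N) a : 0 < a < N ->
  bruhat_lt (fcomp u (sref N a)) u = (u (inord a) < u (inord a.-1)).
Proof.
move=> aN; rewrite -{2}(srefK a u) L1 // sref_a1 // sref_a //.
Qed.
End H.

Section W.
Variables (n i : nat).
Local Notation N := n.+1.
Hypotheses (i0 : 0 < i) (iN : i < N).

Definition wordb m := flatten [seq [seq i + b - c | c <- iota 0 i] | b <- iota 0 m].

Lemma wordbS m : wordb m.+1 = wordb m ++ [seq i + m - c | c <- iota 0 i].
Proof. by rewrite /wordb -addn1 iotaD map_cat flatten_cat /= cats0. Qed.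

Lemma size_wordb m : size (wordb m) = m * i.
Proof.
elim: m => [//|m IH]; rewrite wordbS size_cat IH size_map size_iota; lia.
Qed.

Lemma nth_wordb m b c : b < m -> c < i -> nth 0 (wordb m) (b * i + c) = i + b - c.
Proof.
elim: m => [//|m IH] bm ci; rewrite wordbS nth_cat size_wordb.
case: (ltnP b m) => bm'.
  have -> : b * i + c < m * i by nia.
  exact: IH.
have eb : b = m by lia.
subst b; have -> : (m * i + c < m * i) = false by lia.
rewrite (nth_map 0); last by rewrite size_iota; lia.
rewrite nth_iota; last by lia.
f_equal; lia.
Qed.

Lemma size_word : size (word N i) = (N - i) * i.
Proof. exact: size_wordb. Qed.

Lemma nth_word b c : b < N - i -> c < i -> nth 0 (word N i) (b * i + c) = i + b - c.
Proof. exact: nth_wordb. Qed.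

Lemma pref_step (w : 'S_N) k : k < size (word N i) ->
  pref i w k.+1 = fcomp (pref i w k) (sref N (nth 0 (word N i) k)).
Proof. by move=> hk; rewrite /pref (take_nth 0) // foldl_rcons. Qed.

Definition tau b c p :=
  if p < b then i + p else if p < i + b - c then p - b
  else if p == i + b - c then i + b else if p <= i + b then p - b - 1 else p.

Lemma tau_step b c x : c < i -> tau b c (sw (i + b - c) x) = tau b c.+1 x.
Proof.
move=> ci; rewrite /tau /sw.
case: (x =P (i + b - c).-1) => ?; case: (x =P i + b - c) => ?;
repeat (case: ifP => ?); lia.
Qed.

Lemma tau_blk b x : tau b.+1 0 x = tau b i x.
Proof. rewrite /tau; repeat (case: ifP => ?); lia. Qed.

Lemma tau0 x : tau 0 0 x = x.
Proof. rewrite /tau; repeat (case: ifP => ?); lia. Qed.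

Lemma tau_lt b c x : b < N - i -> x < N -> tau b c x < N.
Proof. move=> *; rewrite /tau; repeat (case: ifP => ?); lia. Qed.

Lemma prefP (w : 'S_N) b c : b < N - i -> c <= i ->
  forall x : 'I_N, val (pref i w (b * i + c) x) = val (w (inord (tau b c x))).
Proof.
have step : forall b c, b < N - i -> c < i ->
   (forall x : 'I_N, val (pref i w (b * i + c) x) = val (w (inord (tau b c x)))) ->
   (forall x : 'I_N, val (pref i w (b * i + c.+1) x) = val (w (inord (tau b c.+1 x)))).
  move=> b' c' bN ci IH x.
  rewrite addnS pref_step; last by rewrite size_word; nia.
  rewrite fcompE IH.
  rewrite nth_word //.
  rewrite srefE; last by lia.
  by rewrite tau_step.
elim: b c => [|b IHb] c bN.
  elim: c => [|c IHc] ci x.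
    by rewrite tau0 inord_val mul0n /pref take0.
  apply: step => //; try lia; apply: IHc; lia.
elim: c => [|c IHc] ci x.
  rewrite addn0 mulSn addnC tau_blk; apply: IHb => //; lia.
apply: step => //; try lia; apply: IHc; lia.
Qed.
End W.

Lemma pactE n (u : 'S_n.+1) x : x < n.+1 -> pact u x.+1 = (u (inord x)).+1.
Proof.
move=> xn; rewrite /pact /=; case: insubP => [y _ ey|]; last by rewrite xn.
by congr (_.+1); congr (u _); apply: val_inj; rewrite /= ey inordK.
Qed.

Section D.
Variables (n i : nat).
Local Notation N := n.+1.
Hypotheses (i0 : 0 < i) (iN : i < N).

Definition kk (p q : nat) := (q - i) * i + (i - 1 - p).

Lemma prefO (w : 'S_N) b c x : b < N - i -> c <= i ->
  pref i w (b * i + c) x = w (inord (tau i b c x)).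
Proof. by move=> bN ci; apply: val_inj; rewrite /= prefP. Qed.

Lemma desc_pair (w : 'S_N) (p q : 'I_N) : p < i <= q ->
  [/\ kk p q < size (word N i),
      bruhat_lt (pref i w (kk p q)) (pref i w (kk p q).+1) = (w p < w q),
      bruhat_lt (pref i w (kk p q).+1) (pref i w (kk p q)) = (w q < w p) &
      root_act (pref i w (kk p q)) (simple_root (nth 0 (word N i) (kk p q)))
        = ((w p).+1, (w q).+1)].
Proof.
move=> /andP[pi iq].
have qN := ltn_ord q.
have bN : q - i < N - i by lia.
have ci : i - 1 - p < i by lia.
have ks : kk p q < size (word N i) by rewrite size_word /kk; nia.
have hnth : nth 0 (word N i) (kk p q) = i + (q - i) - (i - 1 - p) by rewrite nth_word.
set a := i + (q - i) - (i - 1 - p) in hnth.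
have aN : 0 < a < N by rewrite /a; lia.
have t1 : tau i (q - i) (i - 1 - p) a.-1 = p.
  by rewrite /tau /a; repeat (case: ifP => ?); lia.
have t2 : tau i (q - i) (i - 1 - p) a = q.
  by rewrite /tau /a; repeat (case: ifP => ?); lia.
have e1 : pref i w (kk p q) (inord a.-1) = w p.
  rewrite /kk prefO //; last by lia.
  by rewrite inordK ?t1 ?inord_val //; lia.
have e2 : pref i w (kk p q) (inord a) = w q.
  rewrite /kk prefO //; last by lia.
  by rewrite inordK ?t2 ?inord_val //; lia.
split => //.
- by rewrite pref_step // hnth L1 // e1 e2.
- by rewrite pref_step // hnth L2 // e1 e2.
- rewrite hnth /root_act /simple_root /alpha /=.
  have -> : a = a.-1.+1 by lia.
  rewrite !pactE; try lia.
  rewrite e1 prednK ?e2 //; lia.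
Qed.
End D.

Section K.
Variables (n i : nat).
Local Notation N := n.+1.
Hypotheses (i0 : 0 < i) (iN : i < N).

Lemma divmod_uniq b c b' c' : c < i -> c' < i -> b * i + c = b' * i + c' -> b = b' /\ c = c'.
Proof.
move=> ci ci' e.
have hc : c = c'.
  by move: (congr1 (modn^~ i) e); rewrite !modnMDl !modn_small.
subst c'; split => //.
by apply/eqP; rewrite -(eqn_pmul2r i0); apply/eqP; lia.
Qed.

Lemma kk_surj k : k < size (word N i) ->
  exists p q : 'I_N, p < i <= q /\ k = kk i p q.
Proof.
rewrite size_word // => hk.
have ci : k %% i < i by rewrite ltn_pmod.
have bN : k %/ i < N - i by rewrite ltn_divLR.
have ek := divn_eq k i.
move: ci bN ek; move: (k %/ i) (k %% i) => b c ci bN ek.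
have pN : i - 1 - c < N by lia.
have qN : i + b < N by lia.
exists (Ordinal pN), (Ordinal qN); split => /=; first by lia.
rewrite /kk /=.
have -> : i + b - i = b by lia.
have -> : i - 1 - (i - 1 - c) = c by lia.
exact: ek.
Qed.

Lemma kk_inj (p q p' q' : 'I_N) : p < i <= q -> p' < i <= q' ->
  kk i p q = kk i p' q' -> p = p' /\ q = q'.
Proof.
move=> h1 h2 /divmod_uniq [] //; try lia.
move=> e1 e2; split; apply: val_inj => /=; lia.
Qed.

Lemma PH (u : 'S_N) (p : 'I_N) : p < i -> i <= u p -> exists2 q : 'I_N, i <= q & u q < i.
Proof.
move=> pi up.
case: (boolP [exists q : 'I_N, (i <= q) && (u q < i)]).
  by case/existsP=> q /andP[h1 h2]; exists q.
rewrite negb_exists => /forallP H.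
pose A := [set x : 'I_N | x < i].
have sub : (perm_inv u) @: A \subset A.
  apply/subsetP=> x /imsetP[y]; rewrite !inE => yi ->.
  move: (H (perm_inv u y)); rewrite permKV yi andbT -ltnNge; done.
have := subset_cardP (card_imset A (@perm_inj _ (perm_inv u))) sub.
move=> /(_ p); rewrite !inE pi => /imsetP[y]; rewrite inE => yi ep.
by move: up; rewrite ep permKV leqNgt yi.
Qed.

Lemma PH2 (u : 'S_N) : (forall p : 'I_N, p < i -> u p < i) ->
  forall q : 'I_N, i <= q -> i <= u q.
Proof.
move=> H q iq; rewrite leqNgt; apply/negP=> uq.
have h : i <= perm_inv u (u q) by rewrite permK.
have [q' iq' hq'] := PH uq h.
by move: (H _ hq'); rewrite permKV ltnNge iq'.
Qed.

Lemma sref_pres (j : nat) (x : 'I_N) : 0 < j < N -> j != i -> x < i -> sref N j x < i.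
Proof.
move=> jN ji xi; have := srefE x jN; rewrite /sw => ->.
move: ji; case: (nat_of_ord x =P j.-1) => ?; case: (nat_of_ord x =P j) => ? /= /eqP ?; lia.
Qed.

Lemma mono_ge (f : 'I_N -> 'I_N) : (forall x y : 'I_N, x < y -> f x < f y) ->
  forall x : 'I_N, x <= f x.
Proof.
move=> mono.
suff H : forall m (x : 'I_N), val x = m -> x <= f x by move=> x; exact: H.
elim=> [|m IH] x ex; first by rewrite ex.
have mN : m < N by have := ltn_ord x; rewrite -[nat_of_ord x]/(val x) ex; lia.
have := IH (Ordinal mN) erefl; rewrite /=.
have := mono (Ordinal mN) x; rewrite /= -[nat_of_ord x]/(val x) ex ltnSn => /(_ isT).
lia.
Qed.

Lemma incr_id (u : 'S_N) :
  (forall a, 0 < a < N -> u (inord a.-1) < u (inord a)) -> u = 1%g.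
Proof.
move=> H.
have adj : forall z y : 'I_N, (y : nat) = z.+1 -> u z < u y.
  move=> z y ey; have yN := ltn_ord y.
  have := H y; rewrite ey /= => /(_ _).
  rewrite -ey yN => /(_ isT).
  by rewrite !inord_val.
have mono : forall x y : 'I_N, x < y -> u x < u y.
  suff G : forall d (x y : 'I_N), (y : nat) = x + d.+1 -> u x < u y.
    by move=> x y xy; apply: (G (y - x - 1)); lia.
  elim=> [|d IH] x y ey; first by apply: adj; lia.
  have zN : x + d.+1 < N by have := ltn_ord y; lia.
  apply: (ltn_trans (IH x (Ordinal zN) erefl)); apply: adj => /=; lia.
have monoV : forall x y : 'I_N, x < y -> perm_inv u x < perm_inv u y.
  move=> x y xy; rewrite ltnNge leq_eqVlt; apply/negP=> /orP[/eqP e|].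
    by move: xy; rewrite (perm_inj (val_inj e)) ltnn.
  by move/mono; rewrite !permKV ltnNge (ltnW xy).
apply/permP=> x; rewrite perm1; apply: val_inj; apply/anti_leq/andP; split.
  by have := mono_ge monoV (u x); rewrite permK.
exact: (mono_ge mono).
Qed.
End K.

Section M.
Variables (n i : nat).
Local Notation N := n.+1.
Hypotheses (i0 : 0 < i) (iN : i < N).

Lemma Wi0P (u : 'S_N) : (u \in Wi0 N i) = [forall p : 'I_N, (p < i) ==> (u p < i)].
Proof.
set H := [set v : 'S_N | [forall p : 'I_N, (p < i) ==> (v p < i)]].
have gH : group_set H.
  apply/group_setP; split.
    by rewrite inE; apply/forallP => p; rewrite perm1; apply/implyP.
  move=> x y; rewrite !inE => /forallP hx /forallP hy; apply/forallP=> p.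
  apply/implyP=> pi; rewrite permM.
  exact: (implyP (hy (x p)) (implyP (hx p) pi)).
apply/idP/idP.
  move=> uW.
  have : Wi0 N i \subset Group gH.
    rewrite /Wi0 gen_subG; apply/subsetP=> t /imsetP[j]; rewrite inE => /andP[j0 ji] ->.
    rewrite inE; apply/forallP=> p; apply/implyP=> pi; apply: sref_pres => //.
    by rewrite j0 ltn_ord.
  by move/subsetP/(_ u uW); rewrite inE.
move=> hu.
have [m lm] := ubnP (len u).
elim: m u hu lm => // m IH u hu lm.
case: (boolP [forall a : 'I_N, (0 < a) ==> (u (inord a.-1) < u (inord a))]) => [/forallP hall|].
  have -> : u = 1%g.
    apply: (@incr_id n i i0 iN) => a /andP[a0 aN]; have := hall (Ordinal aN).
    by move/implyP/(_ a0).
  exact: group1.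
rewrite negb_forall => /existsP[a]; rewrite negb_imply => /andP[a0 hd].
have aN : 0 < a < N by rewrite a0 ltn_ord.
have hd' : u (inord a) < u (inord a.-1).
  by move: (u_neq u aN) hd; rewrite neq_ltn => /orP[->//|].
have hu' : forall p : 'I_N, p < i -> u p < i.
  by move=> p pi; exact: (implyP (forallP hu p) pi).
have ai : (a : nat) != i.
  apply/eqP=> e.
  have h1 := hu' (inord a.-1); rewrite inordK in h1; last by lia.
  have h2 := @PH2 n i u hu' (inord a); rewrite inordK in h2; last by lia.
  have h1' := h1 (_ : a.-1 < i); have h2' := h2 (_ : i <= a).
  have : u (inord a.-1) < i by apply: h1'; lia.
  have : i <= u (inord a) by apply: h2'; lia.
  lia.
set v := fcomp u (sref N a).
have lv : len v < len u.
  have h : v (inord a.-1) < v (inord a) by rewrite /v sref_a1 // sref_a.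
  by have := len_up aN h; rewrite /v srefK.
have hv : [forall p : 'I_N, (p < i) ==> (v p < i)].
  apply/forallP=> p; apply/implyP=> pi; rewrite /v fcompE; apply: hu'.
  exact: sref_pres.
have vW : v \in Wi0 N i by apply: IH => //; apply: leq_trans lv _; rewrite -ltnS.
have -> : u = fcomp v (sref N a) by rewrite /v srefK.
rewrite /fcomp; apply: groupM => //; apply: mem_gen; apply/imsetP; exists a => //.
by rewrite inE a0.
Qed.
End M.

Section Main.
Variables (n i : nat).
Local Notation N := n.+1.
Hypotheses (i0 : 0 < i) (iN : i < N).

Lemma PH3 (w : 'S_N) (q : 'I_N) : i <= q -> w q < i -> exists2 p : 'I_N, p < i & i <= w p.
Proof.
move=> iq wq.
case: (boolP [exists p : 'I_N, (p < i) && (i <= w p)]).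
  by case/existsP=> p /andP[h1 h2]; exists p.
rewrite negb_exists => /forallP H.
have H' : forall p : 'I_N, p < i -> w p < i.
  by move=> p pi; move: (H p); rewrite pi /= -ltnNge.
by move: (PH2 H' iq); rewrite leqNgt wq.
Qed.

Lemma ord_neq (w : 'S_N) (p q : 'I_N) : p < i -> i <= q -> w p != w q.
Proof.
move=> pi iq; rewrite (inj_eq perm_inj); apply/eqP=> e; move: pi; rewrite e; lia.
Qed.

Lemma sI_desc (w u : 'S_N) : u \in Wi0 N i -> w = fcomp (sref N i) u ->
  exists p0 q0 : 'I_N, [/\ p0 < i <= q0, (w p0 : nat) = i, (w q0 : nat) = i.-1 &
    forall p q : 'I_N, p < i -> i <= q -> w q < w p -> p = p0 /\ q = q0].
Proof.
move=> uW ->.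
have iN' : 0 < i < N by rewrite i0 iN.
have hu : forall p : 'I_N, p < i -> u p < i.
  by move: uW; rewrite Wi0P // => /forallP H p pi; exact: (implyP (H p) pi).
have hu2 := PH2 hu.
have im1 : i.-1 < N by lia.
exists (perm_inv u (inord i.-1)), (perm_inv u (inord i)).
have e1 : (u (perm_inv u (inord i.-1)) : nat) = i.-1 by rewrite permKV inordK.
have e2 : (u (perm_inv u (inord i)) : nat) = i by rewrite permKV inordK.
split.
- apply/andP; split.
    rewrite ltnNge; apply/negP=> h; move: (hu2 _ h); rewrite e1; lia.
  rewrite leqNgt; apply/negP=> h; move: (hu _ h); rewrite e2; lia.
- by rewrite fcompE srefE // e1 /sw eqxx.
- rewrite fcompE srefE // e2 /sw eqxx; case: ifP => // /eqP; lia.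
move=> p q pi iq.
have up := hu _ pi; have uq := hu2 _ iq.
rewrite !fcompE !srefE // /sw.
case: (nat_of_ord (u p) =P i.-1) => hp; case: (nat_of_ord (u q) =P i) => hq;
  case: (nat_of_ord (u q) =P i.-1) => ? ; case: (nat_of_ord (u p) =P i) => ? /=; try lia.
move=> _; split; apply: (@perm_inj _ u); rewrite permKV; apply: val_inj; rewrite /= inordK //.
Qed.

Lemma uniq_to_sI (w : 'S_N) (p0 q0 : 'I_N) : p0 < i -> i <= q0 -> w q0 < w p0 ->
  (forall p q : 'I_N, p < i -> i <= q -> w q < w p -> p = p0 /\ q = q0) ->
  exists2 u, u \in Wi0 N i & w = fcomp (sref N i) u.
Proof.
move=> pi0 iq0 d0 U.
have iN' : 0 < i < N by rewrite i0 iN.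
have s1 : w q0 < i.
  rewrite ltnNge; apply/negP=> h.
  have [q iq wq] := PH pi0 (leq_trans h (ltnW d0)).
  have [_ eq] := U _ _ pi0 iq (leq_trans wq (leq_trans h (ltnW d0))).
  by move: wq; rewrite eq ltnNge h.
have s2 : i <= w p0.
  rewrite leqNgt; apply/negP=> h.
  have [p pi wp] := PH3 iq0 s1.
  have [ep _] := U _ _ pi iq0 (leq_trans s1 wp).
  by move: wp; rewrite ep leqNgt h.
have im1 : i.-1 < N by lia.
have s3 : (w p0 : nat) = i.
  apply/eqP; rewrite eqn_leq s2 andbT leqNgt; apply/negP=> h.
  set r := perm_inv w (inord i).
  have wr : (w r : nat) = i by rewrite /r permKV inordK.
  case: (ltnP r i) => hr.
    have hh : w q0 < w r by rewrite wr.
    have [er _] := U _ _ hr iq0 hh.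
    by move: h; rewrite -er wr ltnn.
  have hh : w r < w p0 by rewrite wr.
  have [_ er] := U _ _ pi0 hr hh.
  by move: s1; rewrite -er wr ltnn.
have s4 : (w q0 : nat) = i.-1.
  apply/eqP; rewrite eqn_leq; apply/andP; split; first by lia.
  rewrite leqNgt; apply/negP=> h.
  set r := perm_inv w (inord i.-1).
  have wr : (w r : nat) = i.-1 by rewrite /r permKV inordK.
  case: (ltnP r i) => hr.
    have hh : w q0 < w r by rewrite wr.
    have [er _] := U _ _ hr iq0 hh.
    by move: s3; rewrite -er wr; lia.
  have hh : w r < w p0 by rewrite wr s3; lia.
  have [_ er] := U _ _ pi0 hr hh.
  by move: h; rewrite -er wr ltnn.
exists (fcomp (sref N i) w); last by rewrite srefKl.
rewrite Wi0P //; apply/forallP=> p; apply/implyP=> pi.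
rewrite fcompE srefE // /sw.
have h1 : (w p : nat) != i.-1.
  rewrite -s4; apply: ord_neq => //.
have h2 : w p <= i.
  rewrite leqNgt; apply/negP=> h.
  have hh : w q0 < w p by lia.
  have [ep _] := U _ _ pi iq0 hh.
  by move: h; rewrite ep s3 ltnn.
rewrite (negbTE h1); case: ifP => [/eqP ?|/negbT ?]; lia.
Qed.

Lemma count_two (P : pred nat) s x y : uniq s -> x \in s -> y \in s -> x != y ->
  P x -> P y -> 1 < count P s.
Proof.
move=> us xs ys xy px py; rewrite -size_filter.
have : size [:: x; y] <= size (filter P s).
  apply: uniq_leq_size; first by rewrite /= inE xy.
  by move=> z; rewrite !inE mem_filter => /orP[]/eqP->; rewrite ?px ?py.
done.
Qed.

Lemma main_N :
  (forall w : 'S_N,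
     (forall k, k < size (word N i) -> bruhat_lt (pref i w k) (pref i w k.+1))
     <-> w \in Wi0 N i)
  /\
  (forall w : 'S_N,
     (count (fun k => ~~ bruhat_lt (pref i w k) (pref i w k.+1))
            (iota 0 (size (word N i))) = 1)
     <-> (exists2 u, u \in Wi0 N i & w = fcomp (sref N i) u))
  /\
  (forall w : 'S_N,
     (exists2 u, u \in Wi0 N i & w = fcomp (sref N i) u) ->
     exists k, [/\ k < size (word N i),
       bruhat_lt (pref i w k.+1) (pref i w k),
       (forall k', k' < size (word N i) ->
          bruhat_lt (pref i w k'.+1) (pref i w k') -> k' = k) &
       root_act (pref i w k) (simple_root (nth 0 (word N i) k))
         = negroot (simple_root i)]).
Proof.
split; [|split].
- move=> w; split.
  + move=> H; rewrite Wi0P //; apply/forallP=> p; apply/implyP=> pi.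
    rewrite ltnNge; apply/negP=> ip.
    have [q iq wq] := PH pi ip.
    have pq : p < i <= q by rewrite pi iq.
    have [ks hb _ _] := desc_pair i0 iN w pq.
    have := H _ ks; rewrite hb; lia.
  + move=> uW k ks.
    have [p [q [pq ->]]] := kk_surj i0 iN ks.
    have [_ hb _ _] := desc_pair i0 iN w pq.
    rewrite hb.
    have hu : forall p : 'I_N, p < i -> w p < i.
      by move: uW; rewrite Wi0P // => /forallP H p' pi'; exact: (implyP (H p') pi').
    case/andP: pq => pi iq.
    have := hu p pi; have := PH2 hu iq; lia.
- move=> w; split.
  + move=> hc.
    have : 0 < count (fun k => ~~ bruhat_lt (pref i w k) (pref i w k.+1))
            (iota 0 (size (word N i))) by rewrite hc.
    rewrite -has_count => /hasP[k0]; rewrite mem_iota add0n => /andP[_ k0s] P0.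
    have [p0 [q0 [pq0 ek0]]] := kk_surj i0 iN k0s.
    have [_ hb0 _ _] := desc_pair i0 iN w pq0.
    move: P0; rewrite ek0 hb0 => P0.
    case/andP: pq0 => pi0 iq0.
    have d0 : w q0 < w p0.
      move: P0; rewrite -leqNgt leq_eqVlt => /orP[/eqP e|//].
      by move: (ord_neq w pi0 iq0); rewrite (val_inj e) eqxx.
    apply: (uniq_to_sI pi0 iq0 d0) => p q pi iq d.
    have pq : p < i <= q by rewrite pi iq.
    have [ks hb _ _] := desc_pair i0 iN w pq.
    case: (eqVneq (kk i p q) (kk i p0 q0)) => [e|ne].
      by apply: (kk_inj i0 iN) e => //; rewrite pi0 iq0.
    exfalso.
    have := @count_two (fun k => ~~ bruhat_lt (pref i w k) (pref i w k.+1))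
            (iota 0 (size (word N i))) _ _ (iota_uniq _ _).
    move=> /(_ (kk i p q) (kk i p0 q0)).
    rewrite ne !mem_iota !add0n ks hb hb0 P0 -leqNgt (ltnW d) hc -ek0 k0s.
    by move=> /(_ isT isT isT isT isT).
  + case=> u uW ew.
    have [p0 [q0 [pq0 wp0 wq0 U]]] := sI_desc uW ew.
    have [ks0 _ _ _] := desc_pair i0 iN w pq0.
    rewrite (@eq_in_count _ _ (pred1 (kk i p0 q0))).
      by rewrite count_uniq_mem ?iota_uniq // mem_iota add0n ks0.
    move=> k; rewrite mem_iota add0n => /andP[_ ks] /=.
    have [p [q [pq ->]]] := kk_surj i0 iN ks.
    have [_ hb _ _] := desc_pair i0 iN w pq.
    case/andP: (pq) => pi iq.
    rewrite hb; apply/idP/eqP.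
      rewrite -leqNgt leq_eqVlt => /orP[/eqP e|d].
        by move: (ord_neq w pi iq); rewrite (val_inj e) eqxx.
      by have [-> ->] := U _ _ pi iq d.
    move=> e; have [-> ->] := kk_inj i0 iN pq pq0 e.
    rewrite wp0 wq0; lia.
- move=> w [u uW ew].
  have [p0 [q0 [pq0 wp0 wq0 U]]] := sI_desc uW ew.
  have [ks _ hb2 hr] := desc_pair i0 iN w pq0.
  exists (kk i p0 q0); split => //.
  + rewrite hb2 wp0 wq0; lia.
  + move=> k' ks' hk'.
    have [p [q [pq ek]]] := kk_surj i0 iN ks'.
    rewrite ek in hk' *.
    have [_ _ hb2' _] := desc_pair i0 iN w pq.
    move: hk'; rewrite hb2' => d.
    case/andP: pq => pi iq.
    by have [-> ->] := U _ _ pi iq d.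
  + rewrite hr wp0 wq0 /negroot /simple_root /alpha /=.
    congr pair; lia.
Qed.
End Main.

Unset Implicit Arguments.

Theorem lemma5p2 (n i : nat) (hn : 3 <= n) (hi1 : 1 <= i) (hi2 : i <= n - 1) :
  (forall w : 'S_n,
     (forall k, k < size (word n i) -> bruhat_lt (pref i w k) (pref i w k.+1))
     <-> w \in Wi0 n i)
  /\
  (forall w : 'S_n,
     (count (fun k => ~~ bruhat_lt (pref i w k) (pref i w k.+1))
            (iota 0 (size (word n i))) = 1)
     <-> (exists2 u, u \in Wi0 n i & w = fcomp (sref n i) u))
  /\
  (forall w : 'S_n,
     (exists2 u, u \in Wi0 n i & w = fcomp (sref n i) u) ->
     exists k, [/\ k < size (word n i),
       bruhat_lt (pref i w k.+1) (pref i w k),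
       (forall k', k' < size (word n i) ->
          bruhat_lt (pref i w k'.+1) (pref i w k') -> k' = k) &
       root_act (pref i w k) (simple_root (nth 0 (word n i) k))
         = negroot (simple_root i)]).
Proof.
move: hn hi2; case: n => [|n] // hn hi2.
have i0 : 0 < i := hi1.
have iN : i < n.+1 by lia.
exact: (main_N i0 iN).
Qed.
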